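(* Let $R$ be an exchange ring and $\alpha=[a_1\ a_2\ \cdots\ a_n]$ a right unimodular row over $R$ (i.e. $a_1R+\cdots+a_nR=R$), with $n\ge 2$. Then $\alpha$ can be transformed by a finite sequence of elementary column operations to a row $[b_1\ b_2\ \cdots\ b_n]$ such that $Rb_1R=R$ and $b_i\in a_iRa_i$ for all $i\ge 2$.
   Context: All rings are unital. A ring $R$ is an exchange ring if for every $a\in R$ there is an idempotent $e\in aR$ with $1-e\in(1-a)R$ (equivalently, $R_R$ has the finite exchange property). An elementary column operation on a row $[c_1\ \cdots\ c_n]$ replaces some entry $c_i$ by $c_i+c_jr$ for some $j\neq i$ and $r\in R$. *)

(* Defs.v *)
From HB Require Import structures.
From mathcomp Require Import all_boot all_order all_algebra.
Set Implicit Arguments. Unset Strict Implicit. Unset Printing Implicit Defensive.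
Import GRing.Theory.
Local Open Scope ring_scope.

Definition exchange_ring (R : pzRingType) : Prop :=
  forall a : R, exists e : R,
    e * e = e /\ (exists r : R, e = a * r) /\ (exists s : R, 1 - e = (1 - a) * s).

Definition right_unimodular (R : pzRingType) (n : nat) (a : {ffun 'I_n -> R}) : Prop :=
  exists r : {ffun 'I_n -> R}, \sum_(i < n) a i * r i = 1.

Definition elem_col_op (R : pzRingType) (n : nat) (c c' : {ffun 'I_n -> R}) : Prop :=
  exists (i j : 'I_n) (r : R), i != j /\
    c' = [ffun k => if k == i then c i + c j * r else c k].

Inductive elem_col_reach (R : pzRingType) (n : nat) :
    {ffun 'I_n -> R} -> {ffun 'I_n -> R} -> Prop :=
  | ecr_refl c : elem_col_reach c c
  | ecr_step c c' c'' : elem_col_op c c' -> elem_col_reach c' c'' -> elem_col_reach c c''.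

Definition full_twosided (R : pzRingType) (b : R) : Prop :=
  exists (m : nat) (x y : 'I_m -> R), \sum_(k < m) x k * b * y k = 1.

(* Main.v *)
Require Import Defs.
From HB Require Import structures.
From mathcomp Require Import all_boot all_order all_algebra.
Import GRing.Theory.
Local Open Scope ring_scope.
Set Implicit Arguments. Unset Strict Implicit. Unset Printing Implicit Defensive.

Definition upd (R : pzRingType) n (c : {ffun 'I_n -> R}) (i : 'I_n) (v : R) :=
  [ffun k => if k == i then v else c k].

Lemma reach_trans (R : pzRingType) n (a b c : {ffun 'I_n -> R}) :
  elem_col_reach a b -> elem_col_reach b c -> elem_col_reach a c.
Proof.
elim=> [//|x y z H _ IH] Hc; exact: ecr_step H (IH Hc).
Qed.

Lemma multi (R : pzRingType) n (c : {ffun 'I_n -> R}) (i : 'I_n) (w : {ffun 'I_n -> R}) :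
  w i = 0 -> elem_col_reach c (upd c i (c i + \sum_j c j * w j)).
Proof.
move=> wi.
suff H : forall k, (k <= n)%N ->
  elem_col_reach c (upd c i (c i + \sum_(j < n | (j < k)%N) c j * w j)).
  have := H n (leqnn n).
  by rewrite (eq_bigl xpredT) // => j; rewrite ltn_ord.
elim=> [_|k IH Hk].
  rewrite big_pred0 // addr0.
  suff -> : upd c i (c i) = c by apply: ecr_refl.
  by apply/ffunP=> j; rewrite ffunE; case: eqP => // ->.
apply: reach_trans (IH (ltnW Hk)) _.
have Hs : \sum_(j < n | (j < k.+1)%N) c j * w j =
   \sum_(j < n | (j < k)%N) c j * w j + c (Ordinal Hk) * w (Ordinal Hk).
  rewrite (bigD1 (Ordinal Hk)) //= addrC; congr (_ + _).
  apply: eq_bigl => j; rewrite ltnS leq_eqVlt.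
  have E : (j == k :> nat) = (j == Ordinal Hk) by [].
  rewrite E; case: (eqVneq j (Ordinal Hk)) => [->|H] /=; first by rewrite ltnn.
  by rewrite andbT.
rewrite Hs.
case: (eqVneq (Ordinal Hk) i) => Hki.
  rewrite Hki wi mulr0 addr0. constructor.
apply: (ecr_step (c' := upd c i (c i + (\sum_(j < n | (j < k)%N) c j * w j +
     c (Ordinal Hk) * w (Ordinal Hk))))); last constructor.
exists i, (Ordinal Hk), (w (Ordinal Hk)); split; first by rewrite eq_sym.
apply/ffunP => j; rewrite !ffunE eqxx (negbTE Hki) addrA.
by case: eqP.
Qed.

Lemma step (R : pzRingType) n (c : {ffun 'I_n -> R}) (i : 'I_n) :
  exchange_ring R -> right_unimodular c ->
  exists c' t, elem_col_reach c c' /\ c' i = c i * t * c i /\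
    (forall j, j != i -> c' j = c j) /\ right_unimodular c'.
Proof.
move=> ex [x Hx].
have [e [ee [[r er] [s es]]]] := ex (c i * x i).
have Hrest : \sum_(j < n | j != i) c j * x j = 1 - c i * x i.
  by rewrite -Hx [in RHS](bigD1 i) //= addrC addrK.
pose w := [ffun j => if j == i then 0 else - (x j * s * c i) ] : {ffun 'I_n -> R}.
have Hw : \sum_j c j * w j = - ((1 - e) * c i).
  rewrite (bigD1 i) //= ffunE eqxx mulr0 add0r es -Hrest.
  rewrite !big_distrl -sumrN /=; apply: eq_bigr => j /negbTE Hj.
  by rewrite ffunE Hj mulrN !mulrA.
have Hci : c i + \sum_j c j * w j = e * c i.
  by rewrite Hw mulrBl mul1r opprB addrCA subrr addr0.
exists (upd c i (c i + \sum_j c j * w j)), (x i * r); split; first by apply: multi; rewrite ffunE eqxx.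
split; first by rewrite ffunE eqxx Hci er !mulrA.
split; first by move=> j /negbTE Hj; rewrite ffunE Hj.
exists [ffun j => if j == i then x i * r else x j * s].
rewrite (bigD1 i) //= !ffunE !eqxx Hci.
have -> : \sum_(j < n | j != i) upd c i (e * c i) j *
     [ffun j => if j == i then x i * r else x j * s] j = 1 - e.
  rewrite es -Hrest big_distrl /=; apply: eq_bigr => j /negbTE Hj.
  by rewrite !ffunE Hj mulrA.
by rewrite -mulrA [c i * _]mulrA -er ee addrC subrK.
Qed.

Lemma final (R : pzRingType) n (c : {ffun 'I_n -> R}) (i : 'I_n) :
  exchange_ring R -> right_unimodular c ->
  exists b, elem_col_reach c b /\ full_twosided (b i) /\
    (forall j, j != i -> b j = c j).
Proof.
move=> ex [x Hx].
have [e [ee [[r er] [s es]]]] := ex (c i * x i).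
have Hrest : \sum_(j < n | j != i) c j * x j = 1 - c i * x i.
  by rewrite -Hx [in RHS](bigD1 i) //= addrC addrK.
pose w := [ffun j => if j == i then 0 else x j * s * (1 - c i)] : {ffun 'I_n -> R}.
have Hw : \sum_j c j * w j = (1 - e) * (1 - c i).
  rewrite (bigD1 i) //= ffunE eqxx mulr0 add0r es -Hrest.
  rewrite !big_distrl /=; apply: eq_bigr => j /negbTE Hj.
  by rewrite ffunE Hj !mulrA.
exists (upd c i (c i + \sum_j c j * w j)); split; first by apply: multi; rewrite ffunE eqxx.
split; last by move=> j /negbTE Hj; rewrite ffunE Hj.
rewrite ffunE eqxx Hw.
have e0 : e * (1 - e) = 0 by rewrite mulrBr mulr1 ee subrr.
have f0 : (1 - e) * (1 - e) = 1 - e by rewrite mulrBl mul1r e0 subr0.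
have hb1 : e * (c i + (1 - e) * (1 - c i)) = e * c i.
  by rewrite mulrDr mulrA e0 mul0r addr0.
have hb2 : (1 - e) * (c i + (1 - e) * (1 - c i)) = 1 - e.
  by rewrite mulrDr mulrA f0 -mulrDr addrCA subrr addr0 mulr1.
exists 2%N, (fun k => if val k == 0%N then e else 1 - e),
  (fun k => if val k == 0%N then x i * r else 1).
rewrite big_ord_recr big_ord_recr big_ord0 /= add0r mulr1 hb1 hb2.
by rewrite -mulrA [c i * _]mulrA -er ee addrC subrK.
Qed.

Theorem corollary2p5 (R : pzRingType) (n : nat) (a : {ffun 'I_n -> R}) :
  exchange_ring R -> (2 <= n)%N -> right_unimodular a ->
  exists b : {ffun 'I_n -> R},
    elem_col_reach a b /\
    (forall i : 'I_n, val i = 0%N -> full_twosided (b i)) /\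
    (forall i : 'I_n, (1 <= val i)%N -> exists r : R, b i = a i * r * a i).
Proof.
move=> ex Hn Hu.
have inv : forall k, (1 <= k <= n)%N -> exists c, elem_col_reach a c /\
   right_unimodular c /\
   (forall j : 'I_n, (0 < j < k)%N -> exists r, c j = a j * r * a j) /\
   (forall j : 'I_n, ~~ (0 < j < k)%N -> c j = a j).
  elim=> [//|k IH] /andP [_ Hk].
  case: k IH Hk => [_ _|k IH Hk].
    exists a; split; first constructor; split => //; split => // j.
    by case/andP => H1 H2; move: H1; rewrite lt0n; case/negP; rewrite -leqn0 -ltnS.
  have [c [Hr [Hu' [H1 H2]]]] := IH (ltnW Hk).
  pose i := Ordinal Hk.
  have [c' [t [Hr' [Hi [Ho Hu'']]]]] := step i ex Hu'.
  exists c'; split; first exact: reach_trans Hr Hr'.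
  split => //.
  have Hci : c i = a i by apply: H2; apply/negP => /andP [_]; rewrite /= ltnn.
  split => j Hj.
    case: (eqVneq j i) => [->|Hji]; first by exists t; rewrite Hi Hci.
    rewrite Ho //; apply: H1; case/andP: Hj => -> /=; rewrite ltnS leq_eqVlt.
    by case/orP => // /eqP Hv; case/eqP: Hji; apply: val_inj.
  have Hji : j != i.
    by apply/eqP => Hv; move: Hj; rewrite Hv /= ltnSn.
  rewrite Ho // H2 //; apply: contra Hj; case/andP => -> /= H; exact: ltnW.
have [c [Hr [Hu' [H1 H2]]]] : exists c, elem_col_reach a c /\ right_unimodular c /\ (forall j : 'I_n, (0 < j < n)%N -> exists r, c j = a j * r * a j) /\ (forall j : 'I_n, ~~ (0 < j < n)%N -> c j = a j).
  apply: inv.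
  by rewrite leqnn andbT; apply: leq_trans Hn.
have H0 : (0 < n)%N by apply: leq_trans Hn.
have [b [Hb [Hf Ho]]] := final (Ordinal H0) ex Hu'.
exists b; split; first exact: reach_trans Hr Hb.
split.
  by move=> i Hi; have -> : i = Ordinal H0 by apply: val_inj.
move=> i Hi; rewrite Ho; first by apply: H1; rewrite Hi ltn_ord.
by apply/eqP => E; move: Hi; rewrite E.
Qed.
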